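(* Let $s\in(0,1)$ and let $E\subset\mathbb{R}^n$ be a set of locally finite $s$-perimeter. Then \[ \partial^-E=\{x\in\mathbb{R}^n: P_s^L(E,B_r(x))>0 \text{ for every } r>0\}. \]
   Context: $\mathcal L_s(A,B):=\int_A\int_B|x-y|^{-n-s}dx\,dy$; $P_s^L(E,\Omega):=\mathcal L_s(E\cap\Omega,E^c\cap\Omega)$; $P_s(E,\Omega):=P_s^L(E,\Omega)+\mathcal L_s(E\cap\Omega,E^c\setminus\Omega)+\mathcal L_s(E\setminus\Omega,E^c\cap\Omega)$. $E$ has locally finite $s$-perimeter if $P_s(E,\Omega)<\infty$ for every bounded open $\Omega$. The measure theoretic boundary is $\partial^-E:=\{x: 0<|E\cap B_r(x)|<\omega_nr^n\ \forall r>0\}$, where $\omega_n=|B_1|$. *)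

(* Defs.v *)
From HB Require Import structures.
From mathcomp Require Import all_boot all_order all_algebra.
From mathcomp Require Import all_classical all_reals all_analysis.
Set Implicit Arguments. Unset Strict Implicit. Unset Printing Implicit Defensive.
Import Order.TTheory GRing.Theory Num.Theory.
Import numFieldNormedType.Exports.
Local Open Scope classical_set_scope.
Local Open Scope ring_scope.

(* Points of R^n are n-tuples of reals; n.-tuple R carries the library's
   product sigma-algebra (= Borel sets of R^n). *)

Section Defs.
Variable R : realType.

Definition enorm (n : nat) (x : n.-tuple R) : R :=
  Num.sqrt (\sum_(i < n) (tnth x i) ^+ 2).
Definition edist (n : nat) (x y : n.-tuple R) : R :=
  Num.sqrt (\sum_(i < n) (tnth x i - tnth y i) ^+ 2).

Definition eball (n : nat) (x : n.-tuple R) (r : R) : set (n.-tuple R) :=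
  [set y | edist x y < r].

Definition origin (n : nat) : n.-tuple R := [tuple of nseq n 0].

Definition open_n (n : nat) (O : set (n.-tuple R)) : Prop :=
  forall x, O x -> exists2 r : R, 0 < r & eball x r `<=` O.
Definition bounded_n (n : nat) (O : set (n.-tuple R)) : Prop :=
  exists M : R, O `<=` eball (origin n) M.

(* Lebesgue integral of a nonnegative function on R^n, defined as the
   iterated (Tonelli) integral against the one-dimensional Lebesgue measure. *)
Fixpoint iint (n : nat) : (n.-tuple R -> \bar R) -> \bar R :=
  match n return (n.-tuple R -> \bar R) -> \bar R with
  | 0 => fun f => f [tuple]
  | m.+1 => fun f =>
      (\int[@lebesgue_measure R]_x iint (fun t : m.-tuple R => f (cons_tuple x t)))%E
  end.

Definition lebn (n : nat) (A : set (n.-tuple R)) : \bar R :=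
  iint (fun x => (\1_A x)%:E).

Definition leb_measurable (n : nat) (E : set (n.-tuple R)) : Prop :=
  exists F N : set (n.-tuple R),
    [/\ measurable F, measurable N, lebn N = 0%E &
        (E `\` F) `|` (F `\` E) `<=` N].

Definition omega (n : nat) : \bar R := lebn (eball (origin n) 1).

Definition Ls (n : nat) (s : R) (A B : set (n.-tuple R)) : \bar R :=
  iint (fun x => ((\1_A x)%:E *
     iint (fun y => ((\1_B y)%:E * (powR (edist x y) (- (n%:R + s)))%:E)))%E).

Definition PsL (n : nat) (s : R) (E O : set (n.-tuple R)) : \bar R :=
  Ls s (E `&` O) (~` E `&` O).

Definition Ps (n : nat) (s : R) (E O : set (n.-tuple R)) : \bar R :=
  (PsL s E O + Ls s (E `&` O) (~` E `\` O) + Ls s (E `\` O) (~` E `&` O))%E.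

Definition locally_finite_Ps (n : nat) (s : R) (E : set (n.-tuple R)) : Prop :=
  forall O, open_n O -> bounded_n O -> (Ps s E O < +oo)%E.

Definition mboundary (n : nat) (E : set (n.-tuple R)) : set (n.-tuple R) :=
  [set x | forall r : R, 0 < r ->
     (0 < lebn (E `&` eball x r))%E /\
     (lebn (E `&` eball x r) < omega n * (r ^+ n)%:E)%E].

End Defs.

(* Main.v *)
Require Import Defs.
From HB Require Import structures.
From mathcomp Require Import all_boot all_order all_algebra.
From mathcomp Require Import all_classical all_reals all_analysis.
From mathcomp Require Import measurable_realfun.
From mathcomp Require Import ring lra.
Import Order.TTheory GRing.Theory Num.Theory.
Import numFieldNormedType.Exports.
Local Open Scope classical_set_scope.
Local Open Scope ring_scope.
Set Implicit Arguments. Unset Strict Implicit. Unset Printing Implicit Defensive.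


Section S.
Variable R : realType.
Local Open Scope ereal_scope.

Definition consP (m : nat) (p : measurableTypeR R * m.-tuple R) : (m.+1).-tuple R :=
  cons_tuple p.1 p.2.

Lemma measurable_consP m : measurable_fun setT (@consP m).
Proof.
apply: (@measurable_cons _ _ _ _ (fun p : measurableTypeR R * m.-tuple R => p.1) m (fun p => p.2)).
exact: measurable_fst. exact: measurable_snd.
Qed.

Definition uncons m (x : (m.+1).-tuple R) : measurableTypeR R * m.-tuple R :=
  (thead x, [tuple of behead x]).

Lemma measurable_uncons m : measurable_fun setT (@uncons m).
Proof.
apply/measurable_fun_pairP; split.
  exact: (@measurable_tnth _ R m.+1 ord0).
exact: measurable_behead.
Qed.

Lemma consPK m : cancel (@uncons m) (@consP m).
Proof. by move=> x; rewrite /consP /uncons /=; apply: val_inj => /=; case: x => -[]. Qed.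

Lemma unconsK m : cancel (@consP m) (@uncons m).
Proof. move=> [x t]; rewrite /consP /uncons /=; congr pair. by apply: val_inj. Qed.

Definition step m (mu : {sigma_finite_measure set (m.-tuple R) -> \bar R}) :
   set ((m.+1).-tuple R) -> \bar R :=
  pushforward ((@lebesgue_measure R) \x mu) (@consP m).

Section step.
Variables (m : nat) (mu : {sigma_finite_measure set (m.-tuple R) -> \bar R}).
Let step0 : step mu set0 = 0.
Proof. by rewrite /step /pushforward preimage_set0 measure0. Qed.

Let step_ge0 A : 0 <= step mu A.
Proof. rewrite /step /pushforward; exact: measure_ge0. Qed.

Let step_sigma_additive : semi_sigma_additive (step mu).
Proof.
have mf := @measurable_consP m.
move=> F mF tF mUF; rewrite /step /pushforward preimage_bigcup.
apply: measure_semi_sigma_additive.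
- by move=> n; rewrite -[X in measurable X]setTI; exact: mf.
- apply/trivIsetP => /= i j _ _ ij; rewrite -preimage_setI.
  by move/trivIsetP : tF => /(_ _ _ _ _ ij) ->//; rewrite preimage_set0.
- by rewrite -preimage_bigcup -[X in measurable X]setTI; exact: mf.
Qed.

HB.instance Definition _ := isMeasure.Build _ _ _
  (step mu) step0 step_ge0 step_sigma_additive.

Lemma step_sigma_finite : sigma_finite setT (step mu).
Proof.
have [F FT Ff] : sigma_finite setT ((@lebesgue_measure R) \x mu).
  have /sigma_finiteP[F [TF ndF Foo]] := sigma_finiteT (@lebesgue_measure R).
  have /sigma_finiteP[G [TG ndG Goo]] := sigma_finiteT mu.
  exists (fun n => F n `*` G n).
   rewrite -setXTT TF TG predeqE => -[x y]; split.
      move=> [/= [n _ Fnx] [k _ Gky]]; exists (maxn n k) => //; split.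
      - by move: x Fnx; exact/subsetPset/ndF/leq_maxl.
      - by move: y Gky; exact/subsetPset/ndG/leq_maxr.
    by move=> [n _ []/= ? ?]; split; exists n.
  move=> k; have [? ?] := Foo k; have [? ?] := Goo k.
  split; first exact: measurableX.
  by rewrite product_measure1E// lte_mul_pinfty// ge0_fin_numE.
exists (fun k => (@uncons m) @^-1` F k).
  apply/seteqP; split => // x _.
  have : setT (uncons x) by [].
  rewrite FT => -[k _ Fk]; by exists k.
move=> k; split.
  rewrite -[X in measurable X]setTI.
  by apply: measurable_uncons => //; exact: (Ff k).1.
rewrite /step /pushforward.
have -> : (@consP m) @^-1` ((@uncons m) @^-1` F k) = F k.
  by apply/seteqP; split => p /=; rewrite unconsK.
exact: (Ff k).2.
Qed.

HB.instance Definition _ := @Measure_isSigmaFinite.Build _ _ _ (step mu) step_sigma_finite.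
End step.

Fixpoint lam (m : nat) : {sigma_finite_measure set (m.-tuple R) -> \bar R} :=
  match m with
  | 0 => [the {sigma_finite_measure set (0.-tuple R) -> \bar R} of \d_ ([tuple] : 0.-tuple R)]
  | m'.+1 => [the {sigma_finite_measure set _ -> \bar R} of step (lam m')]
  end.


Lemma lam0E (f : 0%N.-tuple R -> \bar R) : measurable_fun setT f ->
  \int[lam 0]_x f x = f [tuple].
Proof.
move=> mf; rewrite /= (integral_dirac _ measurableT mf) diracT mul1e.
by congr f; apply: val_inj; case: ([tuple] : 0%N.-tuple R) => -[].
Qed.

Lemma measurable_consx m (x : R) : measurable_fun setT (fun t : m.-tuple R => cons_tuple x t).
Proof.
exact: (@measurable_cons _ _ _ _ (fun _ : m.-tuple R => x) m (fun t => t)).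
Qed.

Lemma iint_lam m (f : m.-tuple R -> \bar R) : measurable_fun setT f ->
  (forall x, 0 <= f x) -> iint f = \int[lam m]_x f x.
Proof.
elim: m f => [|m IH] f mf f0; first by rewrite lam0E.
rewrite /=.
transitivity (\int[@lebesgue_measure R]_x \int[lam m]_t f (cons_tuple x t)).
  apply: eq_integral => x _; apply: IH => //.
  apply: (measurableT_comp mf).
  exact (@measurable_consx m x).
have mfc : measurable_fun setT (f \o @consP m).
  exact: (measurableT_comp mf (@measurable_consP m)).
rewrite -(@fubini_tonelli1 _ _ _ _ _ (@lebesgue_measure R) (lam m) (f \o @consP m) mfc) //.
have := @ge0_integral_pushforward _ _ _ _ R (@consP m) (@measurable_consP m)
  ((@lebesgue_measure R) \x lam m) setT f measurableT mf (fun x _ => f0 x).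
rewrite preimage_setT => <-.
  reflexivity.
by move=> x; exact: f0.
Qed.

Import HBNNSimple.
Section gen.
Context d (T : measurableType d) (mu : {measure set T -> \bar R}).

Lemma integral_le_gen (f g : T -> \bar R) : (forall x, 0 <= f x) ->
  (forall x, f x <= g x) -> \int[mu]_x f x <= \int[mu]_x g x.
Proof.
move=> f0 fg.
have g0 x : 0 <= g x by exact: le_trans (f0 x) (fg x).
rewrite !ge0_integralTE//.
apply: le_ereal_sup => _ [h hf <-]; exists h => //= x.
exact: le_trans (hf x) (fg x).
Qed.

Lemma integral_null_le (N : set T) (f g : T -> \bar R) : measurable N -> mu N = 0 ->
  (forall x, 0 <= f x) -> (forall x, 0 <= g x) ->
  (forall x, ~ N x -> f x <= g x) -> \int[mu]_x f x <= \int[mu]_x g x.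
Proof.
move=> mN N0 f0 g0 fg.
rewrite [X in X <= _]ge0_integralTE//.
apply: ge_ereal_sup => _ [h hf <-].
have := integral_nnsfun mu measurableT h; rewrite patch_setT => <-.
have mh : measurable_fun setT (fun x => (h x)%:E).
  by apply/measurable_EFinP; exact: measurable_funPT.
have mh' : measurable_fun setT (fun x => (h x * \1_(~` N) x)%:E).
  apply/measurable_EFinP; apply: measurable_funM; first exact: measurable_funPT.
  by apply: measurable_indic; exact: measurableC.
rewrite (@ge0_ae_eq_integral _ _ _ mu setT (fun x => (h x)%:E) (fun x => (h x * \1_(~` N) x)%:E)) //.
- apply: integral_le_gen => x.
    by rewrite lee_fin mulr_ge0.
  rewrite /indic; case: (pselect (N x)) => Nx.
    by rewrite memNset //= mulr0 g0.
  rewrite mem_set //= mulr1; apply: le_trans (fg x Nx); exact: hf.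
- by move=> x _; rewrite lee_fin.
- by move=> x _; rewrite lee_fin mulr_ge0.
- exists N; split => // x /= H; apply: contrapT => Nx; apply: H => _.
  by rewrite /indic mem_set //= mulr1.
Qed.

Lemma integral_null_eq (N : set T) (f g : T -> \bar R) : measurable N -> mu N = 0 ->
  (forall x, 0 <= f x) -> (forall x, 0 <= g x) ->
  (forall x, ~ N x -> f x = g x) -> \int[mu]_x f x = \int[mu]_x g x.
Proof.
move=> mN N0 f0 g0 fg; apply/eqP; rewrite eq_le.
apply/andP; split; apply: (integral_null_le mN N0) => // x Nx; rewrite fg //.
Qed.
End gen.

Lemma iint_ge0 m (f : m.-tuple R -> \bar R) : (forall x, 0 <= f x) -> 0 <= iint f.
Proof.
elim: m f => [|m IH] f f0 /=; first exact: f0.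
by apply: integral_ge0 => x _; apply: IH.
Qed.

Lemma iint_le m (f g : m.-tuple R -> \bar R) : (forall x, 0 <= f x) ->
  (forall x, f x <= g x) -> iint f <= iint g.
Proof.
elim: m f g => [|m IH] f g f0 fg /=; first exact: fg.
apply: integral_le_gen => x; first exact: iint_ge0.
exact: IH.
Qed.

Lemma measurable_preconsP m (N : set ((m.+1).-tuple R)) : measurable N ->
  measurable ((@consP m) @^-1` N).
Proof. by move=> mN; rewrite -[X in measurable X]setTI; exact: measurable_consP. Qed.

Lemma iint_null_eq m (N : set (m.-tuple R)) (f g : m.-tuple R -> \bar R) :
  measurable N -> lam m N = 0 ->
  (forall x, 0 <= f x) -> (forall x, 0 <= g x) ->
  (forall x, ~ N x -> f x = g x) -> iint f = iint g.
Proof.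
elim: m N f g => [|m IH] N f g mN N0 f0 g0 fg /=.
  apply: fg => HN; move: N0; rewrite /= /dirac indicE mem_set //.
  by move/eqP; rewrite eqe oner_eq0.
have mA := measurable_preconsP mN.
pose phi := (lam m) \o xsection ((@consP m) @^-1` N).
have mphi : measurable_fun setT phi.
  exact: (measurable_fun_xsection (lam m) mA).
have phi0 : \int[@lebesgue_measure R]_x `|phi x| = 0.
  rewrite -N0 /= /step /pushforward /product_measure1.
  apply: eq_integral => x _; rewrite gee0_abs //; exact: measure_ge0.
have := (ae_eq_integral_abs (@lebesgue_measure R) measurableT mphi).1 phi0.
case=> M [mM M0 HM].
apply: (integral_null_eq mM M0).
- by move=> x; apply: iint_ge0 => t; exact: f0.
- by move=> x; apply: iint_ge0 => t; exact: g0.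
move=> x Mx.
have phix : phi x = 0.
  apply: contrapT => H; apply: Mx; apply: HM => /= H'; apply: H; exact: H'.
apply: (IH (xsection ((@consP m) @^-1` N) x)).
- exact: measurable_xsection.
- exact: phix.
- by move=> t; exact: f0.
- by move=> t; exact: g0.
move=> t Nt; apply: fg => Nxt; apply: Nt.
by rewrite /xsection /= inE.
Qed.
End S.


Section L1.
Variable R : realType.
Variables (a r : R).
Hypothesis hr : 0 < r.
Local Open Scope ereal_scope.

Definition phiA (u : measurableTypeR R) : measurableTypeR R := (a + r * u)%R.

Lemma measurable_phiA : measurable_fun setT phiA.
Proof.
rewrite /phiA; apply: measurable_funD => //; apply: measurable_funM => //.
Qed.

Definition pfA : set (measurableTypeR R) -> \bar R :=
  pushforward (@lebesgue_measure R) phiA.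

Let pfA0 : pfA set0 = 0.
Proof. by rewrite /pfA /pushforward preimage_set0 measure0. Qed.

Let pfA_ge0 A : 0 <= pfA A.
Proof. rewrite /pfA /pushforward; exact: measure_ge0. Qed.

Let pfA_sigma_additive : semi_sigma_additive pfA.
Proof.
have mf := measurable_phiA.
move=> F mF tF mUF; rewrite /pfA /pushforward preimage_bigcup.
apply: measure_semi_sigma_additive.
- by move=> n; rewrite -[X in measurable X]setTI; exact: mf.
- apply/trivIsetP => /= i j _ _ ij; rewrite -preimage_setI.
  by move/trivIsetP : tF => /(_ _ _ _ _ ij) ->//; rewrite preimage_set0.
- by rewrite -preimage_bigcup -[X in measurable X]setTI; exact: mf.
Qed.

HB.instance Definition _ := isMeasure.Build _ _ _ pfA pfA0 pfA_ge0 pfA_sigma_additive.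

Definition rnng : {nonneg R} := NngNum (ltW hr).

Lemma pfA_leb A : measurable A -> (@lebesgue_measure R) A = mscale rnng pfA A.
Proof.
apply: lebesgue_measure_unique => X /ocitvP [->|[[x1 x2] /= x12 ->]].
  by rewrite !measure0.
rewrite /mscale /=; unfold pfA, pushforward.
have -> : phiA @^-1` `]x1, x2] = `]((x1 - a) / r)%R, ((x2 - a) / r)%R]%classic.
  apply/seteqP; split => u /=; rewrite /phiA !in_itv /= => /andP[h1 h2];
    apply/andP; split.
  - by rewrite ltr_pdivrMr // ltrBlDl mulrC.
  - by rewrite ler_pdivlMr // lerBrDl mulrC.
  - by rewrite -ltrBlDl mulrC -ltr_pdivrMr.
  - by rewrite -lerBrDl mulrC -ler_pdivlMr.
rewrite !lebesgue_measure_itv /= !lte_fin x12.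
have -> : ((x1 - a) / r < (x2 - a) / r)%R.
  by rewrite ltr_pM2r ?invr_gt0 // ltrD2r.
rewrite -!EFinB -EFinM; congr EFin.
by field; rewrite gt_eqF.
Qed.

Lemma leb_aff (psi : measurableTypeR R -> \bar R) : measurable_fun setT psi ->
  (forall x, 0 <= psi x) ->
  \int[@lebesgue_measure R]_t psi t = r%:E * \int[@lebesgue_measure R]_u psi (a + r * u)%R.
Proof.
move=> mpsi psi0.
rewrite (eq_measure_integral (mscale rnng pfA)); last first.
  by move=> A mA _; exact: pfA_leb.
rewrite ge0_integral_mscale //; congr (_ * _).
have := @ge0_integral_pushforward _ _ _ _ R phiA measurable_phiA
  (@lebesgue_measure R) setT psi measurableT mpsi (fun x _ => psi0 x).
by rewrite preimage_setT.
Qed.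
End L1.


Section P3.
Variable R : realType.

Definition aff n (a : n.-tuple R) (r : R) (y : n.-tuple R) : n.-tuple R :=
  [tuple tnth a i + r * tnth y i | i < n].

Lemma tnth_aff n (a : n.-tuple R) r y i : tnth (aff a r y) i = tnth a i + r * tnth y i.
Proof. by rewrite tnth_mktuple. Qed.

Lemma aff_cons m a0 (a : m.-tuple R) r u (z : m.-tuple R) :
  aff (cons_tuple a0 a) r (cons_tuple u z) = cons_tuple (a0 + r * u) (aff a r z).
Proof.
apply: eq_from_tnth => i; rewrite tnth_mktuple.
case: (unliftP ord0 i) => [j ->|->].
  by rewrite !tnthS tnth_aff.
by rewrite !tnth0.
Qed.

Lemma measurable_aff n (a : n.-tuple R) r : measurable_fun setT (aff a r).
Proof.
apply/measurable_fun_tnthP => i.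
have -> : ((@tnth n R)^~ i \o aff a r) = (fun y : n.-tuple R => tnth a i + r * tnth y i).
  by apply: funext => y /=; rewrite tnth_aff.
apply: measurable_funD => //; apply: measurable_funM => //.
exact: measurable_tnth.
Qed.

Local Open Scope ereal_scope.

Lemma iint_aff m (a : m.-tuple R) (r : R) (f : m.-tuple R -> \bar R) : (0 < r)%R ->
  measurable_fun setT f -> (forall x, 0 <= f x) ->
  iint f = (r ^+ m)%:E * iint (fun y => f (aff a r y)).
Proof.
move=> hr; elim: m a f => [|m IH] a f mf f0.
  by rewrite /= expr0 mul1e (tuple0 (aff a r [tuple])).
case/tupleP: a => a0 a'.
pose psi := fun t : measurableTypeR R => iint (fun z => f (cons_tuple t (aff a' r z))).
have mpsi : measurable_fun setT psi.
  pose G := fun p : measurableTypeR R * m.-tuple R => f (consP (p.1, aff a' r p.2)).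
  have mG : measurable_fun setT G.
    apply: (measurableT_comp mf); apply: (measurableT_comp (@measurable_consP R m)).
    apply/measurable_fun_pairP; split; first exact: measurable_fst.
    exact: (measurableT_comp (measurable_aff a' r) measurable_snd).
  have -> : psi = fubini_F (lam R m) G.
    apply: funext => t; rewrite /psi /fubini_F iint_lam //.
    apply: (measurableT_comp mf).
    exact (measurableT_comp (@measurable_consx R m t) (measurable_aff a' r)).
  exact: (measurable_fun_fubini_tonelli_F G mG (fun p => f0 _)).
have psi0 t : 0 <= psi t by apply: iint_ge0.
transitivity (\int[@lebesgue_measure R]_t ((r ^+ m)%:E * psi t)).
  rewrite /=; apply: eq_integral => t _; rewrite /psi; apply: IH => //.
  by apply: (measurableT_comp mf); exact (@measurable_consx R m t).
rewrite ge0_integralZl_EFin //; last by rewrite exprn_ge0 // ltW.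
rewrite (leb_aff a0 hr mpsi psi0) /=.
transitivity ((r ^+ m.+1)%:E * \int[@lebesgue_measure R]_u psi (a0 + r * u)%R).
  by rewrite exprSr EFinM muleA.
congr (_ * _); apply: eq_integral => u _.
by rewrite /psi; congr iint; apply: funext => z; rewrite aff_cons.
Qed.
End P3.


Section P4.
Variable R : realType.

Definition sqd n (x y : n.-tuple R) : R := \sum_(i < n) (tnth x i - tnth y i) ^+ 2.

Lemma sqd_ge0 n (x y : n.-tuple R) : 0 <= sqd x y.
Proof. by apply: sumr_ge0 => i _; exact: sqr_ge0. Qed.

Lemma edist_lt n (x y : n.-tuple R) r : 0 < r -> (Defs.edist x y < r) = (sqd x y < r ^+ 2).
Proof.
move=> r0; rewrite /Defs.edist -(ltr_sqrt (sqd x y) (exprn_gt0 2 r0)).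
by rewrite sqrtr_sqr gtr0_norm.
Qed.

Lemma measurable_sqd n (x : n.-tuple R) : measurable_fun setT (sqd x).
Proof.
rewrite /sqd; apply: measurable_sum => i.
apply: measurable_funX; apply: measurable_funB => //.
exact: measurable_tnth.
Qed.

Lemma measurable_ball n (x : n.-tuple R) r : measurable (eball x r).
Proof.
have [r0|r0] := ltP 0 r.
  have -> : eball x r = sqd x @^-1` `]-oo, r ^+ 2[.
    apply/seteqP; split => y /=; rewrite /eball /= edist_lt // in_itv /=; done.
  rewrite -[X in measurable X]setTI.
  have := (measurable_sqd x measurableT (measurable_itv `]-oo, r ^+ 2[)).
  by move=> H; exact H.
have -> : eball x r = set0.
  apply/seteqP; split => y //=; rewrite /eball /= => H.
  have : 0 <= Defs.edist x y by rewrite /Defs.edist sqrtr_ge0.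
  by move=> H0; have := le_lt_trans H0 H; rewrite ltNge r0.
exact: measurable0.
Qed.

Lemma sqd_aff n (x y : n.-tuple R) r : sqd x (aff x r y) = r ^+ 2 * sqd (origin R n) y.
Proof.
rewrite /sqd mulr_sumr; apply: eq_bigr => i _.
by rewrite tnth_aff /origin tnth_nseq; ring.
Qed.

Lemma ball_aff n (x y : n.-tuple R) r : 0 < r ->
  eball x r (aff x r y) = eball (origin R n) 1 y.
Proof.
move=> r0; rewrite /eball /= !edist_lt // sqd_aff expr1n.
apply/propext; split => H.
  by rewrite -(ltr_pM2l (exprn_gt0 2 r0)) mulr1.
by rewrite -[ltRHS]mulr1 ltr_pM2l // exprn_gt0.
Qed.

Local Open Scope ereal_scope.

Lemma iint_indic n (A : set (n.-tuple R)) : measurable A ->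
  iint (fun x => (\1_A x)%:E) = lam R n A.
Proof.
move=> mA; rewrite iint_lam; first by rewrite integral_indic // setIT.
  by apply/measurable_EFinP; exact: measurable_indic.
by move=> x; rewrite lee_fin.
Qed.

Lemma lam_ball n (x : n.-tuple R) r : (0 < r)%R ->
  lam R n (eball x r) = (r ^+ n)%:E * lam R n (eball (origin R n) 1).
Proof.
move=> r0; rewrite -!iint_indic; try exact: measurable_ball.
rewrite (iint_aff x r0) //.
- congr (_ * _); congr iint; apply: funext => y.
  rewrite /indic; congr ((_ : bool)%:R%:E).
  by apply/idP/idP => /set_mem; rewrite ?ball_aff // => H; apply: mem_set; rewrite ?ball_aff.
- by apply/measurable_EFinP; apply: measurable_indic; exact: measurable_ball.
Qed.

Lemma iint0 n : iint (fun _ : n.-tuple R => 0) = 0.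
Proof.
elim: n => [//|n IH] /=.
under eq_integral do rewrite IH.
exact: integral0.
Qed.

Lemma origin_cons m : origin R m.+1 = cons_tuple 0%R (origin R m) :> (m.+1).-tuple R.
Proof. by apply: val_inj. Qed.

Lemma sqd_cons m (a b : R) (x y : m.-tuple R) :
  sqd (cons_tuple a x) (cons_tuple b y) = ((a - b) ^+ 2 + sqd x y)%R.
Proof.
rewrite /sqd big_ord_recl; congr (_ + _)%R.
apply: eq_bigr => i _; congr ((_ - _) ^+ 2)%R.
  exact: (tnthS a x i).
exact: (tnthS b y i).
Qed.

Lemma iint_ball_le n : iint (fun y => (\1_(eball (origin R n) 1) y)%:E) <= (2 ^+ n)%:E.
Proof.
elim: n => [|m IH] /=.
  by rewrite expr0 lee_fin /indic; case: (_ \in _).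
pose I := `](-1)%R, 1%R[%classic : set (measurableTypeR R).
apply: (@le_trans _ _ (\int[@lebesgue_measure R]_t ((2 ^+ m)%:E * (\1_I t)%:E))).
  apply: integral_le_gen => t.
    by apply: iint_ge0 => z; rewrite lee_fin.
  have [It|It] := pselect (I t).
    rewrite /indic (mem_set It) mule1.
    apply: le_trans IH; apply: iint_le => z; first by rewrite lee_fin.
    rewrite /indic lee_fin; case: (boolP (_ \in eball _ _)) => //.
    rewrite inE /eball /= origin_cons edist_lt // sqd_cons expr1n => H.
    rewrite mem_set //= edist_lt // expr1n.
    apply: le_lt_trans H; rewrite lerDr; exact: sqr_ge0.
  rewrite /indic memNset // mule0.
  rewrite -(iint0 m); apply: iint_le => z; first by rewrite lee_fin.
  rewrite /indic lee_fin memNset //.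
  rewrite /eball /= origin_cons edist_lt // sqd_cons expr1n => H; apply: It.
  rewrite /I /= in_itv /=.
  have : ((0 - t) ^+ 2 < 1)%R.
    apply: le_lt_trans H; rewrite lerDl; exact: sqd_ge0.
  move=> h; apply/andP; split; nra.
have HI : \int[@lebesgue_measure R]_x (\1_I x)%:E = 2%:E.
  rewrite integral_indic //; last exact: measurable_itv.
  rewrite (@setIT _ I).
  transitivity ((@lebesgue_measure R) I); first by [].
  rewrite /I lebesgue_measure_itv /= lte_fin ifT; last by lra.
  by rewrite opprK -EFinD.
rewrite ge0_integralZl_EFin //.
- by rewrite HI -EFinM lee_fin exprSr.
- by apply/measurable_EFinP; apply: measurable_indic; exact: measurable_itv.
Qed.

Lemma lam_ball_fin n : lam R n (eball (origin R n) 1) < +oo.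
Proof.
rewrite -iint_indic; last exact: measurable_ball.
exact: le_lt_trans (iint_ball_le n) (ltry _).
Qed.
End P4.


Section P5.
Variable R : realType.
Local Open Scope ereal_scope.

Lemma indic_iff n (A A' : set (n.-tuple R)) y : (A y <-> A' y) ->
  (\1_A y)%:E = (\1_A' y)%:E :> \bar R.
Proof.
move=> H; rewrite /indic.
have -> : (y \in A) = (y \in A') by apply/idP/idP => /set_mem/H/mem_set.
by [].
Qed.

Lemma iint_indic_cst n (A : set (n.-tuple R)) (c : R) : measurable A -> (0 <= c)%R ->
  iint (fun y => (\1_A y)%:E * c%:E) = c%:E * lam R n A.
Proof.
move=> mA c0.
rewrite iint_lam.
- under eq_integral do rewrite muleC.
  rewrite ge0_integralZl_EFin //.
  + by rewrite integral_indic // setIT.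
  + by apply/measurable_EFinP; exact: measurable_indic.
- under eq_fun do rewrite -EFinM.
  apply/measurable_EFinP; apply: measurable_funM => //; exact: measurable_indic.
- by move=> y; rewrite -EFinM lee_fin mulr_ge0.
Qed.


Section Main.
Variables (n : nat) (s : R) (E F N : set (n.-tuple R)).
Hypotheses (s0 : (0 < s)%R) (mF : measurable F) (mN : measurable N)
  (N0 : lam R n N = 0) (EF : forall y, ~ N y -> (E y <-> F y)).
Variables (x : n.-tuple R) (r : R).
Hypothesis r0 : (0 < r)%R.

Let B := eball x r.
Let mB : measurable B := measurable_ball x r.
Let a := lam R n (F `&` B).
Let g := lam R n (~` F `&` B).
Let b := lam R n B.

Lemma lebn_EB : lebn (E `&` B) = a.
Proof.
rewrite /lebn /a -iint_indic; last exact: measurableI.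
apply: (iint_null_eq mN N0) => //; try by move=> y; rewrite lee_fin.
move=> y Ny; apply: indic_iff; rewrite /=.
by split => -[H1 H2]; split => //; apply/(EF Ny).
Qed.

Lemma ag_b : a + g = b.
Proof.
rewrite /a /g /b -measureU.
- congr (lam R n _); apply/seteqP; split => y /=; first by case=> -[].
  by move=> By; case: (pselect (F y)) => Fy; [left|right].
- exact: measurableI.
- by apply: measurableI => //; exact: measurableC.
- by apply/seteqP; split => y //= -[[Fy _] [nFy _]].
Qed.

Lemma b_omega : omega R n * (r ^+ n)%:E = b.
Proof.
rewrite /omega /lebn iint_indic; last exact: measurable_ball.
by rewrite /b /B [RHS]lam_ball // muleC.
Qed.

Lemma b_fin : b < +oo.
Proof.
rewrite /b /B lam_ball //; apply: lte_mul_pinfty => //.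
  by rewrite lee_fin exprn_ge0 // ltW.
exact: lam_ball_fin.
Qed.

Let kf := fun y z : n.-tuple R => (powR (Defs.edist y z) (- (n%:R + s)))%:E.

Lemma kf_ge0 y z : 0 <= kf y z.
Proof. by rewrite /kf lee_fin powR_ge0. Qed.

Lemma PsLE : PsL s E B = iint (fun y => (\1_(E `&` B) y)%:E *
  iint (fun z => (\1_(~` E `&` B) z)%:E * kf y z)).
Proof. by []. Qed.

Lemma null2 (A : set (n.-tuple R)) : measurable A -> lam R n A = 0 ->
  lam R n (N `|` A) = 0.
Proof.
move=> mA A0; apply/eqP; rewrite eq_le measure_ge0 andbT.
apply: le_trans (measureU2 _ mN mA) _.
have E1 : lam R n N + lam R n A = 0 by rewrite N0 A0 adde0.
by move: E1 => /eqP; rewrite eq_le => /andP[].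
Qed.

Lemma PsL0a : a = 0 -> PsL s E B = 0.
Proof.
move=> a0; rewrite PsLE -(iint0 R n).
have mFB : measurable (F `&` B) by exact: measurableI.
apply: (@iint_null_eq R n (N `|` (F `&` B))).
  by apply: measurableU.
  exact: (null2 mFB a0).
- move=> y; apply: mule_ge0; first by rewrite lee_fin.
  by apply: iint_ge0 => z; apply: mule_ge0; [rewrite lee_fin | exact: kf_ge0].
- by [].
move=> y Hy; rewrite /indic memNset ?mul0e //.
move=> [Ey By]; have Ny : ~ N y by move=> Ny; apply: Hy; left.
by apply: Hy; right; split => //; exact: (EF Ny).1 Ey.
Qed.

Lemma PsL0b : g = 0 -> PsL s E B = 0.
Proof.
move=> g0; rewrite PsLE -(iint0 R n); congr iint; apply: funext => y.
have mGB : measurable (~` F `&` B) by apply: measurableI => //; exact: measurableC.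
have -> : iint (fun z => (\1_(~` E `&` B) z)%:E * kf y z) = iint (fun _ : n.-tuple R => 0).
  apply: (@iint_null_eq R n (N `|` (~` F `&` B))).
  - by apply: measurableU.
  - exact: (null2 mGB g0).
  - by move=> z; apply: mule_ge0; [rewrite lee_fin|exact: kf_ge0].
  - by [].
  move=> z Hz; rewrite /indic memNset ?mul0e //.
  move=> [Ez Bz]; have Nz : ~ N z by move=> Nz; apply: Hz; left.
  by apply: Hz; right; split => // Fz; apply: Ez; exact: (EF Nz).2 Fz.
by rewrite iint0 mule0.
Qed.

Lemma sqd_tri y z : (sqd y z <= 2 * (sqd x y + sqd x z))%R.
Proof.
rewrite /sqd -big_split mulr_sumr /=; apply: ler_sum => i _.
set u := tnth x i; set v := tnth y i; set w := tnth z i.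
have := sqr_ge0 (2 * u - v - w)%R; rewrite !expr2 => h; nra.
Qed.

Lemma sqd_eq0 (y z : n.-tuple R) : sqd y z = 0%R -> y = z.
Proof.
move=> H; apply: eq_from_tnth => i.
have := @psumr_eq0P _ _ (fun _ => true) (fun i => (tnth y i - tnth z i) ^+ 2)%R.
move=> /(_ (fun i _ => sqr_ge0 _) H i erefl) /eqP.
by rewrite sqrf_eq0 subr_eq0 => /eqP.
Qed.

Let p := (n%:R + s)%R.
Let p0 : (0 < p)%R.
Proof. by rewrite /p; apply: ltr_wpDl => //; exact: ler0n. Qed.

Lemma kf_lb (y z : n.-tuple R) : B y -> B z -> y <> z ->
  ((2 * r) `^ (- p) <= Defs.edist y z `^ (- p))%R.
Proof.
rewrite /B /eball /= !edist_lt // => Hy Hz yz.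
have sq0 : (0 < sqd y z)%R.
  rewrite lt_def sqd_ge0 andbT; apply/eqP => H; exact: yz (sqd_eq0 H).
have ed0 : (0 < Defs.edist y z)%R by rewrite /Defs.edist sqrtr_gt0.
have ed2 : (Defs.edist y z < 2 * r)%R.
  rewrite edist_lt ?mulr_gt0 //; apply: le_lt_trans (sqd_tri y z) _.
  nra.
rewrite !powRN lef_pV2 ?posrE ?powR_gt0 ?mulr_gt0 //.
apply: ge0_ler_powR; rewrite ?nnegrE ?ltW ?mulr_gt0 //.
Qed.

Lemma Ppos : 0 < a -> 0 < g -> 0 < PsL s E B.
Proof.
move=> a0 g0.
pose c := ((2 * r) `^ (- p))%R.
have c0 : (0 < c)%R by rewrite powR_gt0 // mulr_gt0.
have gfin : g \is a fin_num.
  rewrite ge0_fin_numE ?measure_ge0 //; apply: le_lt_trans b_fin.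
  apply: le_measure; [rewrite inE; apply: measurableI => //; exact: measurableC | by rewrite inE | by move=> y []].
pose gr := fine g.
have ggr : g = gr%:E by rewrite fineK.
have gr0 : (0 < gr)%R by rewrite -lte_fin -ggr.
have mFB : measurable (F `&` B) by exact: measurableI.
have mGB : measurable (~` F `&` B) by apply: measurableI => //; exact: measurableC.
have inner y : (E `&` B) y ->
    (c * gr)%:E <= iint (fun z => (\1_(~` E `&` B) z)%:E * kf y z).
  move=> [Ey By].
  apply: (@le_trans _ _ (iint (fun z => (\1_(~` E `&` B) z)%:E * c%:E))).
    rewrite (@iint_null_eq R n N _ (fun z => (\1_(~` F `&` B) z)%:E * c%:E)) //.
    - rewrite iint_indic_cst //; last exact: ltW.
      by move: ggr; rewrite /g => ->; rewrite -EFinM.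
    - by move=> z; apply: mule_ge0; rewrite lee_fin // ltW.
    - by move=> z; apply: mule_ge0; rewrite lee_fin // ltW.
    move=> z Nz; congr (_ * _); apply: indic_iff.
    by split => -[H1 H2]; split => // H3; apply: H1; apply/(EF Nz).
  apply: iint_le => z.
    by apply: mule_ge0; rewrite lee_fin // ltW.
  rewrite /indic; case: (boolP (z \in _)) => Hz; last by rewrite !mul0e.
  rewrite !mul1e /kf lee_fin.
  move/set_mem : Hz => [nEz Bz]; apply: kf_lb => // yz; apply: nEz; by rewrite -yz.
rewrite PsLE.
apply: (@lt_le_trans _ _ (iint (fun y => (\1_(E `&` B) y)%:E * (c * gr)%:E))).
  rewrite (@iint_null_eq R n N _ (fun y => (\1_(F `&` B) y)%:E * (c * gr)%:E)) //.
  - by rewrite iint_indic_cst ?mulr_ge0 ?ltW // mule_gt0 // lte_fin mulr_gt0.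
  - by move=> y; apply: mule_ge0; rewrite lee_fin // mulr_ge0 // ltW.
  - by move=> y; apply: mule_ge0; rewrite lee_fin // mulr_ge0 // ltW.
  move=> y Ny; congr (_ * _); apply: indic_iff.
  by split => -[H1 H2]; split => //; apply/(EF Ny).
apply: iint_le => y.
  by apply: mule_ge0; rewrite lee_fin // mulr_ge0 // ltW.
rewrite /indic; case: (boolP (y \in _)) => Hy; last by rewrite !mul0e.
by rewrite !mul1e; apply: inner; exact: set_mem.
Qed.

Lemma equiv_r : ((0 < lebn (E `&` B)) /\ (lebn (E `&` B) < omega R n * (r ^+ n)%:E))
  <-> 0 < PsL s E B.
Proof.
rewrite lebn_EB b_omega; split.
- move=> [Ha Hab]; apply: Ppos => //.
  rewrite lt_def measure_ge0 andbT; apply/eqP => g0.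
  by move: Hab; rewrite -ag_b g0 adde0 ltxx.
- move=> H.
  have a_ne0 : a != 0 by apply/eqP => a0; move: H; rewrite PsL0a // ltxx.
  have g_ne0 : g != 0 by apply/eqP => g0; move: H; rewrite PsL0b // ltxx.
  have g_gt0 : 0 < g by rewrite lt_def g_ne0 measure_ge0.
  split; first by rewrite lt_def a_ne0 measure_ge0.
  have afin : a \is a fin_num.
    rewrite ge0_fin_numE ?measure_ge0 //; apply: le_lt_trans b_fin.
    by apply: le_measure; [rewrite inE; exact: measurableI | by rewrite inE | by move=> y []].
  by rewrite -ag_b lteDl.
Qed.

End Main.
End P5.

Unset Implicit Arguments.
Theorem lemma3p1 (R : realType) (n : nat) (s : R) (E : set (n.-tuple R)) :
  0 < s -> s < 1 ->
  leb_measurable E ->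
  locally_finite_Ps s E ->
  mboundary E = [set x | forall r : R, 0 < r -> (0 < PsL s E (eball x r))%E].
Proof.
move=> s0 _ [F [N [mF mN N0 EFN]]] _.
have N0' : lam R n N = 0%E by rewrite -iint_indic.
have EF : forall y, ~ N y -> (E y <-> F y).
  move=> y Ny; split => H; apply: contrapT => H'; apply: Ny; apply: EFN;
    [by left | by right].
apply: funext => x; apply: propext; split => H r r0.
- by apply/(equiv_r s0 mF mN N0' EF x r0); apply: H.
- by apply/(equiv_r s0 mF mN N0' EF x r0); apply: H.
Qed.
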